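(* Let $O$ be a Cayley algebra over a field $F$ of characteristic $\neq2$ and $H$ a 4-dimensional subalgebra of $O$. Then $\operatorname{im}(H)$ contains a 2-dimensional subspace $T$ of type Q, M, D or J, and $H=\langle T\rangle$.
   Context: Cayley algebra: $D_\gamma(D_\beta(D_\alpha(F)))$, $\alpha,\beta,\gamma\in F^\times$, with $D_\gamma(A)=A\oplus A$ (elements $a+ib$), $(a+ib)(c+id)=(ac+\gamma db^* )+i(a^*d+cb)$, $(a+ib)^*=a^*-ib$, starting from $F$ with identity involution; $\operatorname{im}(H)=\{a\in H:a^*=-a\}$; subalgebras contain $1$. Nilpotent line: 1-dimensional subspace of nilpotent elements. Types of 2-dimensional $U\subseteq\operatorname{im}(O)$: Q if no nilpotent line; U if exactly one nilpotent line $Fu$ and $uv\in Fu$ for all $v\in U$; D if exactly one nilpotent line but not type U; M if exactly two nilpotent lines; Z if all elements nilpotent and all products zero; J if all elements nilpotent but not type Z. *)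

(* Defs.v *)
From HB Require Import structures.
From mathcomp Require Import all_boot all_algebra.
Set Implicit Arguments. Unset Strict Implicit. Unset Printing Implicit Defensive.
Import GRing.Theory.
Local Open Scope ring_scope.

(* One Cayley–Dickson doubling step D_g(A) = A (+) A, elements (a, b) = a + i b:
   (a+ib)(c+id) = (ac + g d conj(b)) + i (conj(a) d + c b), conj(a+ib) = conj(a) - i b. *)
Section CayleyDickson.
Variables (F : fieldType) (A : lmodType F).
Definition cd_mul (mul : A -> A -> A) (conj : A -> A) (g : F) (x y : A * A)
  : A * A :=
  (mul x.1 y.1 + g *: mul y.2 (conj x.2), mul (conj x.1) y.2 + mul y.1 x.2).
Definition cd_conj (conj : A -> A) (x : A * A) : A * A := (conj x.1, - x.2).
Definition cd_one (one : A) : A * A := (one, 0).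
End CayleyDickson.

Definition A1 (F : fieldType) := (F^o)%type.
Definition A2 (F : fieldType) := (A1 F * A1 F)%type.
Definition A4 (F : fieldType) := (A2 F * A2 F)%type.
Definition A8 (F : fieldType) := (A4 F * A4 F)%type.

Section Cayley.
Variables (F : fieldType) (al be ga : F).
Definition mul1 (x y : A1 F) : A1 F := (x : F) * y.
Definition conj1 (x : A1 F) : A1 F := x.
Definition one1 : A1 F := (1 : F).
Definition mul2 : A2 F -> A2 F -> A2 F := cd_mul mul1 conj1 al.
Definition conj2 : A2 F -> A2 F := cd_conj conj1.
Definition one2 : A2 F := cd_one one1.
Definition mul4 : A4 F -> A4 F -> A4 F := cd_mul mul2 conj2 be.
Definition conj4 : A4 F -> A4 F := cd_conj conj2.
Definition one4 : A4 F := cd_one one2.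
Definition omul : A8 F -> A8 F -> A8 F := cd_mul mul4 conj4 ga.
Definition oconj : A8 F -> A8 F := cd_conj conj4.
Definition oone : A8 F := cd_one one4.

Definition opow (x : A8 F) (n : nat) : A8 F := iter n (omul x) oone.
Definition nilpotent (x : A8 F) : Prop := exists n, opow x n = 0.

Definition is_subalgebra (H : {vspace A8 F}) : Prop :=
  oone \in H /\ (forall x y, x \in H -> y \in H -> omul x y \in H).

(* im(H) = {a in H : a^* = -a}; "T subset of im(H)". *)
Definition sub_im (T H : {vspace A8 F}) : Prop :=
  forall x, x \in T -> x \in H /\ oconj x = - x.

Definition generated_by (H T : {vspace A8 F}) : Prop :=
  is_subalgebra H /\ (T <= H)%VS /\
  (forall K : {vspace A8 F}, is_subalgebra K -> (T <= K)%VS -> (H <= K)%VS).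

Definition nil_line (U L : {vspace A8 F}) : Prop :=
  (L <= U)%VS /\ \dim L = 1%N /\ (forall x, x \in L -> nilpotent x).

Definition type_Q (U : {vspace A8 F}) : Prop := forall L, ~ nil_line U L.

Definition unique_nil_line (U L : {vspace A8 F}) : Prop :=
  nil_line U L /\ (forall L', nil_line U L' -> L' = L).

Definition type_U (U : {vspace A8 F}) : Prop :=
  exists u, unique_nil_line U <[u]>%VS /\
    (forall v, v \in U -> omul u v \in <[u]>%VS).

Definition type_D (U : {vspace A8 F}) : Prop :=
  (exists L, unique_nil_line U L) /\ ~ type_U U.

Definition type_M (U : {vspace A8 F}) : Prop :=
  exists L1 L2, L1 <> L2 /\ nil_line U L1 /\ nil_line U L2 /\
    (forall L, nil_line U L -> L = L1 \/ L = L2).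

Definition type_Z (U : {vspace A8 F}) : Prop :=
  (forall x, x \in U -> nilpotent x) /\
  (forall x y, x \in U -> y \in U -> omul x y = 0).

Definition type_J (U : {vspace A8 F}) : Prop :=
  (forall x, x \in U -> nilpotent x) /\ ~ type_Z U.
End Cayley.

(* Main.v *)
Require Import Defs.
From HB Require Import structures.
From mathcomp Require Import all_boot all_algebra ring zify.
From Stdlib Require Import Classical.
Import GRing.Theory.
Local Open Scope ring_scope.
Set Implicit Arguments. Unset Strict Implicit. Unset Printing Implicit Defensive.

Section Lin.
Variables (K : fieldType) (vT : vectType K).
Implicit Types (u v w x : vT) (U : {vspace vT}).

Definition indep2 u v := forall a b : K, a *: u + b *: v = 0 -> a = 0 /\ b = 0.
Definition indep3 u v w := forall a b c : K, a *: u + b *: v + c *: w = 0 -> [/\ a = 0, b = 0 & c = 0].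
Definition indep4 u v w x := forall a b c d : K,
  a *: u + b *: v + c *: w + d *: x = 0 -> [/\ a = 0, b = 0, c = 0 & d = 0].

Lemma mem_cons t x (X : seq vT) : t \in <<x :: X>>%VS -> exists a s, s \in <<X>>%VS /\ t = a *: x + s.
Proof.
rewrite span_cons => /memv_addP [p /vlineP [a ->] [s hs ->]]; by exists a, s.
Qed.
Lemma mem_span1 t x : t \in <<[:: x]>>%VS -> exists a, t = a *: x.
Proof. by move=> /mem_cons [a [s [hs ->]]]; move: hs; rewrite span_nil memv0 => /eqP ->; exists a; rewrite addr0. Qed.
Lemma mem_span2 t x y : t \in <<[:: x; y]>>%VS -> exists a b, t = a *: x + b *: y.
Proof. by move=> /mem_cons [a [s [/mem_span1 [b ->] ->]]]; exists a, b. Qed.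
Lemma mem_span3 t x y z : t \in <<[:: x; y; z]>>%VS -> exists a b c, t = a *: x + b *: y + c *: z.
Proof. by move=> /mem_cons [a [s [/mem_span2 [b [c ->]] ->]]]; exists a, b, c; rewrite addrA. Qed.

Lemma in_span2 x y (a b : K) : a *: x + b *: y \in <<[:: x; y]>>%VS.
Proof. by apply: memvD; apply: memvZ; apply: memv_span; rewrite !inE eqxx ?orbT. Qed.

Lemma indep2_free x y : indep2 x y -> free [:: x; y].
Proof.
move=> hi; rewrite free_cons seq1_free; apply/andP; split.
  apply/negP => /mem_span1 [a ha]; have := hi 1 (- a); rewrite scale1r scaleNr ha subrr.
  by case=> // /eqP; rewrite oner_eq0.
apply/eqP => hy; have := hi 0 1; rewrite hy scale0r scaler0 addr0.
by case=> // _ /eqP; rewrite oner_eq0.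
Qed.

Lemma indep3_free x y z : indep3 x y z -> free [:: x; y; z].
Proof.
move=> hi; rewrite free_cons indep2_free ?andbT.
  apply/negP => /mem_span2 [a [b ha]]; have := hi 1 (- a) (- b).
  have -> : 1 *: x + (- a) *: y + (- b) *: z = x - (a *: y + b *: z).
    by rewrite scale1r !scaleNr !opprD !addrA.
  by rewrite -ha subrr; case=> // /eqP; rewrite oner_eq0.
move=> a b h; have := hi 0 a b; rewrite scale0r add0r h; by case.
Qed.

Lemma indep4_free x y z w : indep4 x y z w -> free [:: x; y; z; w].
Proof.
move=> hi; rewrite free_cons indep3_free ?andbT.
  apply/negP => /mem_span3 [a [b [c ha]]]; have := hi 1 (- a) (- b) (- c).
  have -> : 1 *: x + (- a) *: y + (- b) *: z + (- c) *: w = x - (a *: y + b *: z + c *: w).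
    by rewrite scale1r !scaleNr !opprD !addrA.
  by rewrite -ha subrr; case=> // /eqP; rewrite oner_eq0.
move=> a b c h; have := hi 0 a b c; rewrite scale0r add0r h; by case.
Qed.

Lemma free2_indep x y : free [:: x; y] -> indep2 x y.
Proof.
rewrite free_cons seq1_free => /andP [hx hy] a b hab.
have ha : a = 0.
  apply/eqP/negP => /negP ha; move/negP: hx; apply.
  have -> : x = (- (a^-1 * b)) *: y.
    apply: (scalerI ha); rewrite scalerA mulrN mulrA divff // mul1r scaleNr.
    by apply/eqP; rewrite -subr_eq0 opprK hab.
  by apply: memvZ; apply: memv_span1.
split=> //; move: hab; rewrite ha scale0r add0r => /eqP; rewrite scaler_eq0 (negbTE hy) orbF.
by move/eqP.
Qed.

Lemma free3_indep x y z : free [:: x; y; z] -> indep3 x y z.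
Proof.
rewrite free_cons => /andP [hx /free2_indep hyz] a b c habc.
have ha : a = 0.
  apply/eqP/negP => /negP ha; move/negP: hx; apply.
  have -> : x = (- (a^-1 * b)) *: y + (- (a^-1 * c)) *: z.
    apply: (scalerI ha); rewrite scalerDr !scalerA !mulrN !mulrA divff // !mul1r !scaleNr.
    by apply/eqP; rewrite -opprD -subr_eq0 opprK addrA habc.
  exact: in_span2.
move: habc; rewrite ha scale0r add0r => /hyz [hb hc]; by split.
Qed.

Lemma pick2 U : (2 <= \dim U)%N -> exists u v, [/\ u \in U, v \in U & indep2 u v].
Proof.
have := vbasisP U; case: (vbasis U) => s /= hs hb hd.
move: hs hb; case: s => [|u [|v r]] /= hs hb; try by rewrite -(eqP hs) in hd.
exists u, v; split; try (by apply: (basis_mem hb); rewrite !inE eqxx ?orbT).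
apply: free2_indep; have := basis_free hb; by rewrite (_ : u :: v :: r = [:: u; v] ++ r) // => /catl_free.
Qed.

Lemma pick3 U : (3 <= \dim U)%N -> exists u v w, [/\ u \in U, v \in U, w \in U & indep3 u v w].
Proof.
have := vbasisP U; case: (vbasis U) => s /= hs hb hd.
move: hs hb; case: s => [|u [|v [|w r]]] /= hs hb; try by rewrite -(eqP hs) in hd.
exists u, v, w; split; try (by apply: (basis_mem hb); rewrite !inE eqxx ?orbT).
apply: free3_indep; have := basis_free hb.
by rewrite (_ : u :: v :: w :: r = [:: u; v; w] ++ r) // => /catl_free.
Qed.

Lemma dim1P (L : {vspace vT}) : \dim L = 1%N -> exists l, l != 0 /\ L = <[l]>%VS.
Proof.
have := vbasisP L; case: (vbasis L) => s /= hs hb hd.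
move: hs hb; case: s => [|l [|v r]] /= hs hb; try by rewrite hd in hs.
exists l; split; first by apply: (basis_not0 hb); rewrite inE.
by rewrite -(span_basis hb) span_seq1.
Qed.

Lemma dim_free (X : seq vT) : free X -> \dim <<X>> = size X.
Proof. by move/eqP. Qed.

Lemma indep4_rel u v w (p : vT) (a b c d : K) : indep4 u v w p ->
  d *: p = a *: u + b *: v + c *: w -> d = 0.
Proof.
move=> hi hp; have [] // := hi (- a) (- b) (- c) d.
by rewrite hp !scaleNr -!opprD addNr.
Qed.

Lemma indep4_2 u v w (p : vT) : indep4 u v w p -> indep2 v w.
Proof. by move=> hi a b h; have [] := hi 0 a b 0; rewrite ?scale0r ?add0r ?addr0. Qed.

Lemma line_eq (l m : vT) : l != 0 -> m != 0 -> l \in <[m]>%VS -> <[l]>%VS = <[m]>%VS.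
Proof.
move=> hl hm hlm; apply/eqP; rewrite eqEdim -memvE hlm /= !dim_vline hl hm //.
Qed.
End Lin.

Section Oct.
Variables (F : fieldType) (al be ga : F).

Definition b2 (x y : A2 F) : F := x.1 * y.1 - al * (x.2 * y.2).
Definition b4 (x y : A4 F) : F := b2 x.1 y.1 - be * b2 x.2 y.2.
Definition ob (x y : A8 F) : F := b4 x.1 y.1 - ga * b4 x.2 y.2.
Definition on (x : A8 F) : F := ob x x.
Definition ore (x : A8 F) : A1 F := x.1.1.1.

Local Notation "x ** y" := (omul al be ga x y) (at level 40, left associativity).
Local Notation one := (oone F).
Local Notation cj := (@oconj F).

Lemma eq8 (x y : A8 F) : x.1.1.1 = y.1.1.1 -> x.1.1.2 = y.1.1.2 -> x.1.2.1 = y.1.2.1 -> x.1.2.2 = y.1.2.2 ->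
  x.2.1.1 = y.2.1.1 -> x.2.1.2 = y.2.1.2 -> x.2.2.1 = y.2.2.1 -> x.2.2.2 = y.2.2.2 -> x = y.
Proof. by case: x => [[[? ?] [? ?]] [[? ?] [? ?]]]; case: y => [[[? ?] [? ?]] [[? ?] [? ?]]] /= -> -> -> -> -> -> -> ->. Qed.

Lemma scalA1 (c : F) (a : A1 F) : c *: a = c * a. Proof. by []. Qed.
Ltac d8 x := let a0 := fresh "a" in let a1 := fresh "a" in let a2 := fresh "a" in let a3 := fresh "a" in
  let a4 := fresh "a" in let a5 := fresh "a" in let a6 := fresh "a" in let a7 := fresh "a" in
  destruct x as [[[a0 a1] [a2 a3]] [[a4 a5] [a6 a7]]].
Ltac unf := rewrite /= /omul /oconj /mul4 /mul2 /mul1 /conj4 /conj2 /conj1 /cd_mul /cd_conj /=;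
  rewrite /GRing.scale /= /on /ore /ob /b4 /b2 /oone /one4 /one2 /one1 /cd_one /=; rewrite ?scalA1.
Ltac octs := apply: eq8; unf.

Lemma omDl x y z : (x + y) ** z = x ** z + y ** z.
Proof. d8 x; d8 y; d8 z; octs; ring. Qed.
Lemma omDr x y z : z ** (x + y) = z ** x + z ** y.
Proof. d8 x; d8 y; d8 z; octs; ring. Qed.
Lemma omZl (c : F) x y : (c *: x) ** y = c *: (x ** y).
Proof. d8 x; d8 y; octs; ring. Qed.
Lemma omZr (c : F) x y : x ** (c *: y) = c *: (x ** y).
Proof. d8 x; d8 y; octs; ring. Qed.
Lemma om1l x : one ** x = x.
Proof. d8 x; octs; ring. Qed.
Lemma om1r x : x ** one = x.
Proof. d8 x; octs; ring. Qed.
Lemma conjE x : cj x = (2 * ore x) *: one - x.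
Proof. d8 x; octs; ring. Qed.
Lemma conjD x y : cj (x + y) = cj x + cj y.
Proof. d8 x; d8 y; octs; ring. Qed.
Lemma conjZ (c : F) x : cj (c *: x) = c *: cj x.
Proof. d8 x; octs; ring. Qed.
Lemma obC x y : ob x y = ob y x.
Proof. d8 x; d8 y; unf; ring. Qed.
Lemma obDl x y z : ob (x + y) z = ob x z + ob y z.
Proof. d8 x; d8 y; d8 z; unf; ring. Qed.
Lemma obZl (c : F) x y : ob (c *: x) y = c * ob x y.
Proof. d8 x; d8 y; unf; ring. Qed.
Lemma ob1 x : ob x one = ore x.
Proof. d8 x; unf; ring. Qed.
Lemma oreD x y : ore (x + y) = ore x + ore y. Proof. by []. Qed.
Lemma oreZ (c : F) x : ore (c *: x) = c * ore x. Proof. by []. Qed.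
Lemma ore1 : ore one = 1. Proof. by []. Qed.
Lemma L1 u : cj u ** u = (on u) *: one.
Proof. d8 u; octs; ring. Qed.
Lemma II u v z : cj u ** (v ** z) + cj v ** (u ** z) = (2 * ob u v) *: z.
Proof. d8 u; d8 v; d8 z; octs; ring. Qed.
Lemma reM x y : ore (x ** y) = ob x (cj y).
Proof. d8 x; d8 y; unf; ring. Qed.
Lemma obMl x y : ob (x ** y) x = on x * ore y.
Proof. d8 x; d8 y; unf; ring. Qed.
Lemma obMr x y : ob (x ** y) y = on y * ore x.
Proof. d8 x; d8 y; unf; ring. Qed.
Lemma onM x y : on (x ** y) = on x * on y.
Proof. d8 x; d8 y; unf; ring. Qed.
Lemma om0l x : 0 ** x = 0.
Proof. d8 x; octs; ring. Qed.
Lemma om0r x : x ** 0 = 0.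
Proof. d8 x; octs; ring. Qed.
Lemma omNl x y : (- x) ** y = - (x ** y).
Proof. d8 x; d8 y; octs; ring. Qed.
Lemma omNr x y : x ** (- y) = - (x ** y).
Proof. d8 x; d8 y; octs; ring. Qed.
Lemma obDr x y z : ob z (x + y) = ob z x + ob z y.
Proof. by rewrite obC obDl !(obC z). Qed.
Lemma obZr (c : F) x y : ob y (c *: x) = c * ob y x.
Proof. by rewrite obC obZl obC. Qed.
Lemma ob0r x : ob x 0 = 0.
Proof. d8 x; unf; ring. Qed.
Lemma ob0l x : ob 0 x = 0.
Proof. d8 x; unf; ring. Qed.
Lemma obNl x y : ob (- x) y = - ob x y.
Proof. d8 x; d8 y; unf; ring. Qed.
Lemma obNr x y : ob y (- x) = - ob y x.
Proof. d8 x; d8 y; unf; ring. Qed.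
Lemma ore0 : ore 0 = 0. Proof. by []. Qed.
Lemma oreN x : ore (- x) = - ore x. Proof. by []. Qed.

Ltac dim8 x hx := d8 x; rewrite /ore /= in hx; subst.

Lemma conjI x : ore x = 0 -> cj x = - x.
Proof. by move=> hx; rewrite conjE hx mulr0 scale0r sub0r. Qed.
Lemma sqI x : ore x = 0 -> x ** x = (- on x) *: one.
Proof. move=> hx; dim8 x hx; octs; ring. Qed.
Lemma laltI x z : ore x = 0 -> x ** (x ** z) = (- on x) *: z.
Proof. move=> hx; dim8 x hx; d8 z; octs; ring. Qed.
Lemma acomm x y : ore x = 0 -> ore y = 0 -> x ** y + y ** x = (- (2 * ob x y)) *: one.
Proof. move=> hx hy; dim8 x hx; dim8 y hy; octs; ring. Qed.
Lemma reMI x y : ore x = 0 -> ore y = 0 -> ore (x ** y) = - ob x y.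
Proof. move=> hx hy; dim8 x hx; dim8 y hy; unf; ring. Qed.
Lemma Kstep u v z : ore u = 0 -> u ** z = 0 -> u ** (v ** z) = (- (2 * ob u v)) *: z.
Proof.
move=> hu hz; have := II u v z; rewrite hz om0r addr0 conjI // omNl => h.
by rewrite scaleNr -h opprK.
Qed.
Lemma on2 (a b : F) u v : on (a *: u + b *: v) = a ^+ 2 * on u + 2 * a * b * ob u v + b ^+ 2 * on v.
Proof. d8 u; d8 v; unf; ring. Qed.
Lemma on0 : on 0 = 0. Proof. by rewrite /on ob0l. Qed.
Lemma one_neq0 : one != 0.
Proof. by apply/eqP => /(congr1 ore); rewrite ore1 ore0 => /eqP; rewrite oner_eq0. Qed.

Definition ev (x0 x1 x2 x3 x4 x5 x6 x7 : F) : A8 F := (((x0, x1), (x2, x3)), ((x4, x5), (x6, x7))).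

Lemma nondeg (hal : al != 0) (hbe : be != 0) (hga : ga != 0) w :
  (forall v, ob w v = 0) -> w = 0.
Proof.
move=> hv; d8 w.
have c0 : a = ob (a, a0, (a1, a2), (a3, a4, (a5, a6))) (ev 1 0 0 0 0 0 0 0) by unf; ring.
have c1 : al * a0 = - ob (a, a0, (a1, a2), (a3, a4, (a5, a6))) (ev 0 1 0 0 0 0 0 0) by unf; ring.
have c2 : be * a1 = - ob (a, a0, (a1, a2), (a3, a4, (a5, a6))) (ev 0 0 1 0 0 0 0 0) by unf; ring.
have c3 : al * be * a2 = ob (a, a0, (a1, a2), (a3, a4, (a5, a6))) (ev 0 0 0 1 0 0 0 0) by unf; ring.
have c4 : ga * a3 = - ob (a, a0, (a1, a2), (a3, a4, (a5, a6))) (ev 0 0 0 0 1 0 0 0) by unf; ring.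
have c5 : al * ga * a4 = ob (a, a0, (a1, a2), (a3, a4, (a5, a6))) (ev 0 0 0 0 0 1 0 0) by unf; ring.
have c6 : be * ga * a5 = ob (a, a0, (a1, a2), (a3, a4, (a5, a6))) (ev 0 0 0 0 0 0 1 0) by unf; ring.
have c7 : al * be * ga * a6 = - ob (a, a0, (a1, a2), (a3, a4, (a5, a6))) (ev 0 0 0 0 0 0 0 1) by unf; ring.
rewrite !hv ?oppr0 in c0 c1 c2 c3 c4 c5 c6 c7.
move: c1 c2 c3 c4 c5 c6 c7 => /eqP c1 /eqP c2 /eqP c3 /eqP c4 /eqP c5 /eqP c6 /eqP c7.
rewrite !mulf_eq0 (negbTE hal) (negbTE hbe) (negbTE hga) /= in c1 c2 c3 c4 c5 c6 c7.
by move/eqP: c0 => c0; apply: eq8 => /=; apply/eqP.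
Qed.

Lemma onZ (c : F) x : on (c *: x) = c ^+ 2 * on x.
Proof. d8 x; unf; ring. Qed.

Lemma idU (s k a b t : F) (o x y : A8 F) :
  (- s) *: o - k *: (a *: x + b *: y) - a *: ((- t) *: o) =
  (a * t - s) *: o + (- (k * a)) *: x + (- (k * b)) *: y.
Proof. d8 o; d8 x; d8 y; octs; ring. Qed.


Opaque omul oconj ob on.

Lemma opow2 x n : ore x = 0 -> opow al be ga x n.+2 = (- on x) *: opow al be ga x n.
Proof. by move=> hx; rewrite /opow !iterS laltI. Qed.

Lemma nilpI x : ore x = 0 -> nilpotent al be ga x <-> on x = 0.
Proof.
move=> hx; split; last first.
  by move=> h0; exists 2%N; rewrite opow2 // h0 oppr0 scale0r.
move=> [n hn]; apply/eqP/negP => /negP hnz; move: hn; apply/eqP.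
have hx0 : x != 0 by apply: contraNneq hnz => ->; rewrite on0.
suff : forall n, opow al be ga x n != 0 /\ opow al be ga x n.+1 != 0 by case/(_ n).
elim=> [|m [ih1 ih2]]; first by split; rewrite /opow /= ?om1r // one_neq0.
split; first exact: ih2.
by rewrite opow2 // scaler_eq0 negb_or oppr_eq0 hnz /=.
Qed.

Fact ore_lin : linear ore. Proof. by []. Qed.
HB.instance Definition _ := GRing.isLinear.Build F (A8 F) (A1 F) *:%R ore ore_lin.
Definition obL w (v : A8 F) : A1 F := ob w v.
Fact ob_lin w : linear (obL w).
Proof. by move=> c u v; rewrite /obL obDr obZr. Qed.
HB.instance Definition _ w := GRing.isLinear.Build F (A8 F) (A1 F) *:%R (obL w) (ob_lin w).
Fact omul_lin w : linear (omul al be ga w).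
Proof. by move=> c u v; rewrite omDr omZr. Qed.
HB.instance Definition _ w := GRing.isLinear.Build F (A8 F) (A8 F) *:%R (omul al be ga w) (omul_lin w).

Lemma dim_ker1 (U : {vspace A8 F}) (f : 'Hom(A8 F, A1 F)) :
  (\dim U <= \dim (U :&: lker f) + 1)%N.
Proof. rewrite -(limg_ker_dim f U) leq_add2l; apply: leq_trans (dimvS (subvf _)) _; by rewrite dimvf. Qed.


Lemma ob1l x : ob one x = ore x.
Proof. by rewrite obC ob1. Qed.

Lemma indep2_neq0r (u v : A8 F) : indep2 u v -> v != 0.
Proof. move=> hi; apply/eqP => hv; have := hi 0 1; rewrite hv scale0r scaler0 addr0; case=> // _ /eqP; by rewrite oner_eq0. Qed.
Lemma indep2_sym (u v : A8 F) : indep2 u v -> indep2 v u.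
Proof. by move=> hi a b h; rewrite addrC in h; case: (hi _ _ h). Qed.

Lemma exv2 (hal : al != 0) (hbe : be != 0) (hga : ga != 0) (w1 w2 : A8 F) : indep2 w1 w2 ->
  exists v, ob w1 v != 0 /\ ob w2 v = 0.
Proof.
move=> hi; have hw2 := indep2_neq0r hi.
have [v0 hv0] : exists v0, ob w2 v0 != 0.
  apply: NNPP => hn; move/eqP: hw2; apply; apply: nondeg => // v.
  by apply: NNPP => hv; apply: hn; exists v; apply/eqP.
apply: NNPP => hn.
have key : forall v, ob w2 v0 * ob w1 v - ob w1 v0 * ob w2 v = 0.
  move=> v; set v' := ob w2 v0 *: v - ob w2 v *: v0.
  have h2 : ob w2 v' = 0 by rewrite /v' obDr obNr !obZr mulrC subrr.
  have h1 : ob w1 v' = 0.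
    by apply: NNPP => h; apply: hn; exists v'; split => //; apply/eqP.
  by move: h1; rewrite /v' obDr obNr !obZr (mulrC (ob w2 v)).
have := hi (ob w2 v0) (- ob w1 v0).
have -> : ob w2 v0 *: w1 + - ob w1 v0 *: w2 = 0.
  by apply: nondeg => // v; rewrite obDl !obZl mulNr; exact: key.
by case=> // h _; move: hv0; rewrite h eqxx.
Qed.

Lemma dimA8 : \dim (fullv : {vspace A8 F}) = 8%N.
Proof. by rewrite dimvf. Qed.

Lemma Kinv (h2 : (2%:R : F) != 0) (u v z : A8 F) : ore u = 0 -> ob u v != 0 -> u ** z = 0 ->
  u ** (((- (2%:R * ob u v))^-1 *: v) ** z) = z.
Proof.
move=> hu hv hz; rewrite Kstep // obZr.
have hn : - (2%:R * ob u v) != 0 by rewrite oppr_eq0 mulf_neq0.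
by rewrite mulrCA -mulrN mulVf // scale1r.
Qed.

Definition Lm w : 'End(A8 F) := linfun (omul al be ga w).
Lemma LmE w z : Lm w z = w ** z. Proof. by rewrite lfunE. Qed.
Lemma memLm w z : (z \in lker (Lm w)) = (w ** z == 0). Proof. by rewrite memv_ker LmE. Qed.

Lemma Klemma (hal : al != 0) (hbe : be != 0) (hga : ga != 0) (h2 : (2%:R : F) != 0)
  (w1 w2 z1 z2 z3 : A8 F) :
  ore w1 = 0 -> ore w2 = 0 -> indep2 w1 w2 -> indep3 z1 z2 z3 ->
  w1 ** z1 = 0 -> w1 ** z2 = 0 -> w1 ** z3 = 0 ->
  w2 ** z1 = 0 -> w2 ** z2 = 0 -> w2 ** z3 = 0 -> False.
Proof.
move=> hw1 hw2 hi hz e11 e12 e13 e21 e22 e23.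
have [va [hva1 hva2]] := exv2 hal hbe hga hi.
have [vb [hvb2 hvb1]] := exv2 hal hbe hga (indep2_sym hi).
have hsub : (lker (Lm w2) <= Lm w2 @: fullv)%VS.
  apply/subvP => z; rewrite memLm => /eqP hz0.
  have -> : z = Lm w2 (((- (2%:R * ob w2 vb))^-1 *: vb) ** z) by rewrite LmE Kinv.
  by apply: memv_img; exact: memvf.
have hd2 : (\dim (lker (Lm w2)) <= 4)%N.
  have := limg_ker_dim (Lm w2) fullv; rewrite capfv dimA8 => hs.
  have := dimvS hsub; move: hs; set a := \dim _; set b := \dim _; lia.
have hsub2 : (lker (Lm w2) :&: lker (Lm w1) <= Lm w1 @: lker (Lm w2))%VS.
  apply/subvP => z /memv_capP []; rewrite !memLm => /eqP hz2 /eqP hz1.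
  have -> : z = Lm w1 (((- (2%:R * ob w1 va))^-1 *: va) ** z) by rewrite LmE Kinv.
  apply: memv_img.
  by rewrite memLm Kstep // obZr hva2 mulr0 mulr0 oppr0 scale0r.
have inK : forall z, w1 ** z = 0 -> w2 ** z = 0 -> z \in (lker (Lm w2) :&: lker (Lm w1))%VS.
  by move=> z h1 h2'; rewrite memv_cap !memLm h1 h2' eqxx.
have hK : (3 <= \dim (lker (Lm w2) :&: lker (Lm w1)))%N.
  have hf := indep3_free hz.
  have <- : \dim <<[:: z1; z2; z3]>> = 3%N by rewrite dim_free.
  apply: dimvS; apply/span_subvP => z; rewrite !inE => /or3P [] /eqP ->; exact: inK.
have := limg_ker_dim (Lm w1) (lker (Lm w2)); have := dimvS hsub2; move: hK hd2.
set a := \dim _; set b := \dim _; set c := \dim _; lia.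
Qed.

Lemma reRel (a b c d : F) (u v w : A8 F) :
  ore (a *: one + b *: u + c *: v + d *: w) = a + b * ore u + c * ore v + d * ore w.
Proof. by rewrite !oreD !oreZ ore1 mulr1. Qed.
Lemma obRel (a b c d : F) (u v w t : A8 F) :
  ob (a *: one + b *: u + c *: v + d *: w) t = a * ore t + b * ob u t + c * ob v t + d * ob w t.
Proof. by rewrite !obDl !obZl ob1l. Qed.

Lemma nullpair (w w' : A8 F) : ore w = 0 -> ore w' = 0 -> on w = 0 -> on w' = 0 -> ob w w' = 0 ->
  indep2 w w' -> w ** w' != 0 -> indep4 one w w' (w ** w').
Proof.
move=> hw hw' hn hn' hob hi hne a b c d hR.
have ww : w ** w = 0 by rewrite sqI // hn oppr0 scale0r.
have wwp : w' ** w = - (w ** w').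
  by apply/eqP; rewrite -addr_eq0 acomm // obC hob mulr0 oppr0 scale0r.
have w_wwp : w ** (w ** w') = 0 by rewrite laltI // hn oppr0 scale0r.
have wp_wwp : w' ** (w ** w') = 0.
  by rewrite -(opprK (w ** w')) -wwp omNr laltI // hn' oppr0 scale0r oppr0.
have wpwp : w' ** w' = 0 by rewrite sqI // hn' oppr0 scale0r.
have ha : a = 0.
  by have := congr1 ore hR; rewrite reRel hw hw' reMI // hob oppr0 !mulr0 !addr0.
move: hR; rewrite ha scale0r add0r => hR.
have hc : c = 0.
  have := congr1 (omul al be ga w) hR; rewrite !omDr !omZr ww w_wwp om0r !scaler0 add0r addr0.
  by move/eqP; rewrite scaler_eq0 (negbTE hne) orbF => /eqP.
have hb : b = 0.
  have := congr1 (omul al be ga w') hR; rewrite !omDr !omZr wwp wp_wwp wpwp om0r !scaler0 !addr0.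
  by move/eqP; rewrite scalerN oppr_eq0 scaler_eq0 (negbTE hne) orbF => /eqP.
move: hR; rewrite hb hc !scale0r !add0r => /eqP; rewrite scaler_eq0 (negbTE hne) orbF => /eqP hd.
by split.
Qed.

Lemma mixpair (x w : A8 F) : ore x = 0 -> ore w = 0 -> on x != 0 -> ob x w = 0 -> w != 0 ->
  (forall nu, x ** w != nu *: w) -> indep4 one x w (x ** w).
Proof.
move=> hx hw hn hob hw0 hne a b c d hR.
have ha : a = 0.
  by have := congr1 ore hR; rewrite reRel hx hw reMI // hob oppr0 !mulr0 !addr0.
have hb : b = 0.
  have := congr1 (fun t => ob t x) hR; rewrite /= obRel obMl hx hw obC hob ob0l.
  by rewrite !mulr0 !addr0 add0r => /eqP; rewrite mulf_eq0 (negbTE hn) orbF => /eqP.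
move: hR; rewrite ha hb !scale0r !add0r => hR.
have hd : d = 0.
  apply/eqP/negP => /negP hd; move/negP: (hne (- (c / d))); apply; apply/eqP.
  apply: (scalerI hd); rewrite scalerA mulrN mulrCA divff // mulr1 scaleNr.
  by apply/eqP; rewrite -addr_eq0 addrC hR.
move: hR; rewrite hd scale0r addr0 => /eqP; rewrite scaler_eq0 (negbTE hw0) orbF => /eqP hc.
by split.
Qed.

Lemma freeA (x y : A8 F) : ore x = 0 -> ore y = 0 -> on x != 0 -> on y != 0 -> ob x y = 0 ->
  indep4 one x y (x ** y).
Proof.
move=> hx hy hnx hny hob a b c d hR.
have ha : a = 0.
  by have := congr1 ore hR; rewrite reRel hx hy reMI // hob oppr0 !mulr0 !addr0.
have hb : b = 0.
  have := congr1 (fun t => ob t x) hR; rewrite /= obRel obMl hx hy obC hob ob0l.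
  by rewrite !mulr0 !addr0 add0r => /eqP; rewrite mulf_eq0 (negbTE hnx) orbF => /eqP.
have hc : c = 0.
  have := congr1 (fun t => ob t y) hR; rewrite /= obRel obMr hx hy hob ob0l.
  rewrite !mulr0 !addr0 ?add0r -/(on y).
  by move=> /eqP; rewrite mulf_eq0 (negbTE hny) orbF => /eqP.
move: hR; rewrite ha hb hc !scale0r !add0r => hR.
have := congr1 on hR; rewrite onZ onM on0 => /eqP.
rewrite !mulf_eq0 (negbTE hnx) (negbTE hny) !orbF orbb => /eqP hd.
by split.
Qed.

Lemma ob_null2 (h2 : (2%:R : F) != 0) (u v : A8 F) : on u = 0 -> on v = 0 -> on (u + v) = 0 -> ob u v = 0.
Proof.
move=> hu hv huv; have e := on2 1 1 u v; rewrite !scale1r huv hu hv in e.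
have : 2%:R * ob u v = 0 by rewrite [RHS]e; ring.
by move=> /eqP; rewrite mulf_eq0 (negbTE h2) /= => /eqP.
Qed.

Lemma indep3_12 (u v w : A8 F) : indep3 u v w -> indep2 u v.
Proof. by move=> hi a b h; have [] := hi a b 0; rewrite ?scale0r ?addr0. Qed.
Lemma indep3_13 (u v w : A8 F) : indep3 u v w -> indep2 u w.
Proof. by move=> hi a b h; have [] := hi a 0 b; rewrite ?scale0r ?addr0. Qed.
Lemma indep3_23 (u v w : A8 F) : indep3 u v w -> indep2 v w.
Proof. by move=> hi a b h; have [] := hi 0 a b; rewrite ?scale0r ?add0r. Qed.
Lemma indep2_neq0l (u v : A8 F) : indep2 u v -> u != 0.
Proof. by move=> /indep2_sym /indep2_neq0r. Qed.

Lemma exists_pair (hal : al != 0) (hbe : be != 0) (hga : ga != 0) (h2 : (2%:R : F) != 0)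
  (H : {vspace A8 F}) : is_subalgebra al be ga H -> \dim H = 4%N ->
  exists x y, [/\ x \in H, y \in H, ore x = 0, ore y = 0 & indep4 one x y (x ** y)].
Proof.
move=> [h1 hM] hd.
set V := (H :&: lker (linfun ore))%VS.
have memV : forall t, t \in V = (t \in H) && (ore t == 0).
  by move=> t; rewrite memv_cap memv_ker lfunE.
have hV : (3 <= \dim V)%N by have := dim_ker1 H (linfun ore); rewrite hd -/V; lia.
apply: NNPP => NF.
have NF' : forall x y, x \in V -> y \in V -> ~ indep4 one x y (x ** y).
  move=> x y; rewrite !memV => /andP [hx /eqP hx'] /andP [hy /eqP hy'] hi.
  by apply: NF; exists x, y.
have prod0 : forall u v, u \in V -> v \in V -> on u = 0 -> on v = 0 -> ob u v = 0 -> indep2 u v ->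
    u ** v = 0.
  move=> u v hu hv hnu hnv hob hi; apply/eqP/negP => /negP hne; apply: (NF' u v hu hv).
  move: hu hv; rewrite !memV => /andP [_ /eqP hu] /andP [_ /eqP hv].
  exact: nullpair.
have Vre : forall t, t \in V -> ore t = 0 by move=> t; rewrite memV => /andP [_ /eqP].
case: (classic (exists x, x \in V /\ on x != 0)) => [[x [hxV hnx]] | hall].
  set W := (V :&: lker (linfun (obL x)))%VS.
  have memW : forall t, t \in W = (t \in V) && (ob x t == 0).
    by move=> t; rewrite memv_cap memv_ker lfunE /obL.
  have hW : (2 <= \dim W)%N by have := dim_ker1 V (linfun (obL x)); rewrite -/W; lia.
  case: (classic (exists y, y \in W /\ on y != 0)) => [[y [hyW hny]] | hallW].
    move: hyW; rewrite memW => /andP [hyV /eqP hob].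
    by apply: (NF' x y hxV hyV); apply: freeA => //; apply: Vre.
  have Wn : forall t, t \in W -> on t = 0.
    by move=> t ht; apply/eqP/negP => /negP h; apply: hallW; exists t.
  have WV : forall t, t \in W -> t \in V by move=> t; rewrite memW => /andP [].
  have Wob : forall t, t \in W -> ob x t = 0 by move=> t; rewrite memW => /andP [_ /eqP].
  have Wnu : forall t, t \in W -> t != 0 -> exists nu, x ** t = nu *: t.
    move=> t ht ht0; apply: NNPP => hn; apply: (NF' x t hxV (WV _ ht)).
    apply: mixpair => //; try by apply: Vre => //; apply: WV.
      exact: Wob.
    by move=> nu; apply/eqP => h; apply: hn; exists nu.
  have [w1 [w2 [hw1 hw2 hi]]] := pick2 hW.
  have hw10 := indep2_neq0l hi; have hw20 := indep2_neq0r hi.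
  have hw12 : w1 + w2 \in W by apply: memvD.
  have hw120 : w1 + w2 != 0.
    by apply/eqP => h; have [] := hi 1 1; rewrite ?scale1r // => /eqP; rewrite oner_eq0.
  have [nu1 e1] := Wnu _ hw1 hw10.
  have [nu2 e2] := Wnu _ hw2 hw20.
  have [nu e3] := Wnu _ hw12 hw120.
  have [hn1 hn2] : nu1 = nu /\ nu2 = nu.
    have [] := hi (nu1 - nu) (nu2 - nu).
      have e4 : nu1 *: w1 + nu2 *: w2 = nu *: w1 + nu *: w2 by rewrite -e1 -e2 -omDr e3 scalerDr.
      by rewrite !scalerBl addrACA e4 -opprD subrr.
    by move=> /eqP; rewrite subr_eq0 => /eqP -> /eqP; rewrite subr_eq0 => /eqP ->.
  rewrite hn1 in e1; rewrite hn2 in e2.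
  have hnu : nu * nu = - on x.
    have := laltI w1 (Vre _ hxV); rewrite e1 omZr e1 scalerA => /eqP.
    by rewrite -subr_eq0 -scalerBl scaler_eq0 (negbTE hw10) orbF subr_eq0 => /eqP.
  have hnu0 : nu != 0.
    by apply/eqP => h; move: hnu; rewrite h mulr0 => /eqP; rewrite eq_sym oppr_eq0 (negbTE hnx).
  have wx : forall w, w \in W -> x ** w = nu *: w -> w ** x = - (nu *: w).
    move=> w hw e; apply/eqP; rewrite -addr_eq0 -e addrC acomm; last 2 first.
    - exact: Vre hxV.
    - exact: Vre (WV _ hw).
    rewrite (_ : ob x w = 0); last exact: Wob.
    by rewrite mulr0 oppr0 scale0r.
  set z := nu *: one + x.
  have wz : forall t, t \in W -> x ** t = nu *: t -> t ** z = 0.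
    by move=> t ht e; rewrite /z omDr omZr om1r (wx t ht e) subrr.
  have hob12 : ob w1 w2 = 0 by apply: ob_null2 => //; apply: Wn.
  have p12 : w1 ** w2 = 0 by apply: prod0 => //; try apply: WV; try apply: Wn.
  have p21 : w2 ** w1 = 0.
    have := acomm (Vre _ (WV _ hw2)) (Vre _ (WV _ hw1)).
    by rewrite obC hob12 mulr0 oppr0 scale0r p12 addr0.
  have p11 : w1 ** w1 = 0 by rewrite sqI ?Vre ?WV // Wn // oppr0 scale0r.
  have p22 : w2 ** w2 = 0 by rewrite sqI ?Vre ?WV // Wn // oppr0 scale0r.
  apply: (Klemma hal hbe hga h2 (w1:=w1) (w2:=w2) (z1:=w1) (z2:=w2) (z3:=z)) => //;
    try (by apply: Vre; apply: WV); try (by apply: wz).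
  move=> a b c habc.
  have hc : c = 0.
    have := congr1 ore habc; rewrite !oreD !oreZ /z oreD oreZ ore1 (Vre _ (WV _ hw1)).
    rewrite (Vre _ (WV _ hw2)) (Vre _ hxV) ?ore0 !mulr0 !add0r addr0 mulr1.
    by move=> /eqP; rewrite mulf_eq0 (negbTE hnu0) orbF => /eqP.
  move: habc; rewrite hc scale0r addr0 => /hi [-> ->]; by split.
have hall' : forall t, t \in V -> on t = 0.
  by move=> t ht; apply/eqP/negP => /negP h; apply: hall; exists t.
have [v1 [v2 [v3 [hv1 hv2 hv3 hi]]]] := pick3 hV.
have ob0 : forall u v, u \in V -> v \in V -> ob u v = 0.
  by move=> u v hu hv; apply: ob_null2 => //; apply: hall' => //; apply: memvD.
have pr : forall u v, u \in V -> v \in V -> indep2 u v -> u ** v = 0.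
  by move=> u v hu hv hi2; apply: prod0 => //; [exact: hall' | exact: hall' | exact: ob0].
apply: (Klemma hal hbe hga h2 (w1:=v1) (w2:=v2) (z1:=v1) (z2:=v2) (z3:=v3)) => //;
  try (by apply: Vre).
- exact: indep3_12 hi.
- by rewrite sqI ?Vre // hall' // oppr0 scale0r.
- by apply: pr => //; apply: indep3_12 hi.
- by apply: pr => //; apply: indep3_13 hi.
- by apply: pr => //; apply: indep2_sym; apply: indep3_12 hi.
- by rewrite sqI ?Vre // hall' // oppr0 scale0r.
- by apply: pr => //; apply: indep3_23 hi.
Qed.

Section TT.
Variables (x y : A8 F).
Hypotheses (hx : ore x = 0) (hy : ore y = 0) (hi : indep4 one x y (x ** y)).
Local Notation T := (<<[:: x; y]>>%VS).

Lemma hxT : x \in T. Proof using hx hy hi. by apply: memv_span; rewrite !inE eqxx. Qed.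
Lemma hyT : y \in T. Proof using hx hy hi. by apply: memv_span; rewrite !inE eqxx orbT. Qed.

Lemma reT t : t \in T -> ore t = 0.
Proof using hx hy hi. by move=> /mem_span2 [a [b ->]]; rewrite oreD !oreZ hx hy !mulr0 addr0. Qed.

Lemma notZ : ~ type_Z al be ga T.
Proof using hx hy hi.
move=> [_ hz]; have h := hz x y hxT hyT.
have := @indep4_rel _ _ _ _ _ _ 0 0 0 1 hi; rewrite scale1r h !scale0r !addr0 => /(_ erefl) /eqP.
by rewrite oner_eq0.
Qed.

Lemma notU : ~ type_U al be ga T.
Proof using hx hy hi.
move=> [u [[[hsub [hdim _]] _] hprod]].
have huT : u \in T by apply: (subvP hsub); apply: memv_line.
have hu0 : u != 0 by move: hdim; rewrite dim_vline; case: (u != 0).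
have hu := reT huT.
have [a [b ha]] := mem_span2 huT.
case: (eqVneq b 0) => hb.
  have [k hk] := vlineP _ _ (hprod y hyT).
  move: hk; rewrite ha hb scale0r addr0 omZl scalerA => hk.
  have := @indep4_rel _ _ _ _ _ _ 0 (k * a) 0 a hi; rewrite hk !scale0r add0r addr0.
  move=> /(_ erefl) ha0; move: hu0; by rewrite ha ha0 hb !scale0r addr0 eqxx.
have [k hk] := vlineP _ _ (hprod x hxT).
have e1 : x ** u = a *: (x ** x) + b *: (x ** y) by rewrite ha omDr !omZr.
have e5 : x ** u = (- (2%:R * ob x u)) *: one - k *: u by rewrite -hk -(acomm hx hu) addrK.
have e6 : b *: (x ** y) = x ** u - a *: (x ** x) by rewrite e1 addrC addKr.
move: e6; rewrite e5 sqI // [X in k *: X]ha idU => e6.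
by move: hb; rewrite (indep4_rel hi e6) eqxx.
Qed.

Lemma lineT L : nil_line al be ga T L -> exists l, [/\ l != 0, L = <[l]>%VS, l \in T & on l = 0].
Proof using hx hy hi.
move=> [hsub [hdim hnil]]; have [l [hl0 hL]] := dim1P hdim.
have hlT : l \in T by apply: (subvP hsub); rewrite hL memv_line.
exists l; split => //.
apply/(nilpI (reT hlT)); apply: hnil; by rewrite hL memv_line.
Qed.

Lemma dimT : \dim T = 2%N.
Proof using hx hy hi. by rewrite dim_free // indep2_free //; apply: indep4_2 hi. Qed.

Lemma three (h2 : (2%:R : F) != 0) L1 L2 L3 : nil_line al be ga T L1 -> nil_line al be ga T L2 ->
  nil_line al be ga T L3 -> L1 <> L2 -> L3 <> L1 -> L3 <> L2 ->
  forall t, t \in T -> nilpotent al be ga t.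
Proof using hx hy hi.
move=> /lineT [l1 [h10 -> h1T hn1]] /lineT [l2 [h20 -> h2T hn2]] /lineT [l3 [h30 -> h3T hn3]] n12 n31 n32.
move=> t htT; apply/(nilpI (reT htT)).
have hi12 : indep2 l1 l2.
  move=> a b hab; have ha : a = 0.
    apply/eqP/negP => /negP ha; apply: n12; apply: (line_eq h10 h20).
    have -> : l1 = (- (a^-1 * b)) *: l2.
      apply: (scalerI ha); rewrite scalerA mulrN mulrA divff // mul1r scaleNr.
      by apply/eqP; rewrite -subr_eq0 opprK hab.
    by apply: memvZ; apply: memv_line.
  split=> //; move: hab; rewrite ha scale0r add0r => /eqP; rewrite scaler_eq0 (negbTE h20) orbF.
  by move/eqP.
have hS : <<[:: l1; l2]>>%VS = T.
  apply/eqP; rewrite eqEdim dimT dim_free ?indep2_free //= andbT.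
  by apply/span_subvP => z; rewrite !inE => /orP [] /eqP ->.
have h3S : l3 \in <<[:: l1; l2]>>%VS by rewrite hS.
have [a [b e3]] := mem_span2 h3S.
have ha : a != 0.
  apply/eqP => ha; apply: n32; apply: (line_eq h30 h20); rewrite e3 ha scale0r add0r.
  by apply: memvZ; apply: memv_line.
have hb : b != 0.
  apply/eqP => hb; apply: n31; apply: (line_eq h30 h10); rewrite e3 hb scale0r addr0.
  by apply: memvZ; apply: memv_line.
have hob : ob l1 l2 = 0.
  move: hn3; rewrite e3 on2 hn1 hn2 !mulr0 add0r addr0 => /eqP.
  by rewrite !mulf_eq0 (negbTE h2) (negbTE ha) (negbTE hb) /= => /eqP.
have htS : t \in <<[:: l1; l2]>>%VS by rewrite hS.
have [c [d ->]] := mem_span2 htS.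
by rewrite on2 hn1 hn2 hob !mulr0 !addr0.
Qed.

End TT.


Lemma main_aux (hal : al != 0) (hbe : be != 0) (hga : ga != 0) (h2 : (2%:R : F) != 0)
  (H : {vspace A8 F}) : is_subalgebra al be ga H -> \dim H = 4%N ->
  exists T : {vspace A8 F},
    sub_im T H /\ \dim T = 2%N /\
    (type_Q al be ga T \/ type_M al be ga T \/ type_D al be ga T \/
     type_J al be ga T) /\
    generated_by al be ga H T.
Proof.
move=> hH hd; have [x [y [hxH hyH hx hy hi]]] := exists_pair hal hbe hga h2 hH hd.
have [h1 hM] := hH.
have hxT := hxT hx hy hi; have hyT := hyT hx hy hi.
exists <<[:: x; y]>>%VS; split; [|split; [exact: (dimT hx hy hi)|split]].
- move=> t htT; split; last by apply: conjI; apply: (reT hx hy hi htT).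
  have [a [b ->]] := mem_span2 htT.
  by apply: memvD; apply: memvZ.
- case: (classic (exists L, nil_line al be ga <<[:: x; y]>>%VS L)) => [[L1 hL1]|hno]; last first.
    by left => L hL; apply: hno; exists L.
  case: (classic (forall L', nil_line al be ga <<[:: x; y]>>%VS L' -> L' = L1)) => [huniq|hnu].
    right; right; left; split; first by exists L1; split.
    exact: (notU hx hy hi).
  have [L2 [hL2 hne]] : exists L2, nil_line al be ga <<[:: x; y]>>%VS L2 /\ L2 <> L1.
    apply: NNPP => h; apply: hnu => L' hL'; apply: NNPP => hne; apply: h; exists L'; by split.
  case: (classic (forall L, nil_line al be ga <<[:: x; y]>>%VS L -> L = L1 \/ L = L2)) => [hall|hnall].
    right; left; exists L1, L2; split; first by move=> e; apply: hne; rewrite e.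
    by split => //; split.
  have [L3 [hL3 [n31 n32]]] : exists L3, nil_line al be ga <<[:: x; y]>>%VS L3 /\ L3 <> L1 /\ L3 <> L2.
    apply: NNPP => h; apply: hnall => L hL.
    case: (classic (L = L1)) => [->|n1]; first by left.
    case: (classic (L = L2)) => [->|n2]; first by right.
    by exfalso; apply: h; exists L.
  right; right; right; split; last exact: (notZ hx hy hi).
  exact: (three hx hy hi h2 hL1 hL2 hL3 (fun e => hne (esym e)) n31 n32).
- split => //; split.
    by apply/span_subvP => z; rewrite !inE => /orP [] /eqP ->.
  move=> K [hK1 hKM] hTK.
  have hxK : x \in K by apply: (subvP hTK).
  have hyK : y \in K by apply: (subvP hTK).
  have hSH : (<<[:: one; x; y; x ** y]>> <= H)%VS.
    apply/span_subvP => z; rewrite !inE => /or4P [] /eqP ->; [exact: h1|exact: hxH|exact: hyH|].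
    exact: hM.
  have hdS : \dim <<[:: one; x; y; x ** y]>> = 4%N by rewrite dim_free // indep4_free.
  have -> : H = <<[:: one; x; y; x ** y]>>%VS.
    by apply/eqP; rewrite eq_sym eqEdim hSH hd hdS /=.
  apply/span_subvP => z; rewrite !inE => /or4P [] /eqP ->; [exact: hK1|exact: hxK|exact: hyK|].
  exact: hKM.
Qed.

End Oct.

Unset Implicit Arguments.

Theorem mainTheorem14 (F : fieldType) (al be ga : F)
    (hal : al != 0) (hbe : be != 0) (hga : ga != 0)
    (hchar : (2%:R : F) != 0)
    (H : {vspace A8 F})
    (hH : is_subalgebra al be ga H) (hdim : \dim H = 4%N) :
  exists T : {vspace A8 F},
    sub_im T H /\ \dim T = 2%N /\
    (type_Q al be ga T \/ type_M al be ga T \/ type_D al be ga T \/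
     type_J al be ga T) /\
    generated_by al be ga H T.
Proof. exact: (main_aux hal hbe hga hchar hH hdim). Qed.
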